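(* Let $(A,f)$ be a finite-dimensional abelian quadratic Lie algebra over a field $\mathbb{K}$ of characteristic zero, let $d$ be an $f$-skew-symmetric derivation of $A$, and let $(A_b,f_b)$ be the one-dimensional double extension of $(A,f)$ by $(b,d)$. Then $A_b$ is $2$-step nilpotent if and only if $d\neq 0$ and $d^2=0$.
   Context: A quadratic Lie algebra $(A,f)$ is a Lie algebra with a non-degenerate symmetric invariant bilinear form $f$ (invariance: $f([x,y],z)+f(y,[x,z])=0$); here $A$ is abelian so every linear map is a derivation. A linear map $d$ is $f$-skew-symmetric if $f(d(x),y)+f(x,d(y))=0$. The one-dimensional double extension of $(A,f)$ by $(b,d)$ is $A_b=\mathbb{K}b\oplus A\oplus\mathbb{K}\beta$ with bracket $[\lambda b+a+\mu\beta,\lambda' b+a'+\mu'\beta]=\lambda d(a')-\lambda' d(a)+[a,a']_A+f(d(a),a')\beta$ and form $f_b(\lambda b+a+\mu\beta,\lambda' b+a'+\mu'\beta)=\lambda\mu'+\lambda'\mu+f(a,a')$. $2$-step nilpotent means $[L,[L,L]]=0\neq[L,L]$. *)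

(* Defs.v *)
From HB Require Import structures.
From mathcomp Require Import all_boot all_order all_algebra.
Set Implicit Arguments. Unset Strict Implicit. Unset Printing Implicit Defensive.
Import GRing.Theory.
Local Open Scope ring_scope.

(* Elements of the double extension A_b = K b (+) A (+) K beta are encoded as
   triples (lambda, a, mu) standing for lambda b + a + mu beta. *)
Definition dext (K : fieldType) (A : vectType K) := (K * A * K)%type.

(* Bracket of the one-dimensional double extension of the ABELIAN quadratic
   Lie algebra (A, f) by (b, d):
   [l b + a + m beta, l' b + a' + m' beta]
     = l d(a') - l' d(a) + [a,a']_A + f(d a, a') beta,  with [a,a']_A = 0. *)
Definition dext_bracket (K : fieldType) (A : vectType K)
    (f : A -> A -> K) (d : A -> A) (x y : dext A) : dext A :=
  let: (l, a, m) := x in let: (l', a', m') := y in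
  (0, l *: d a' - l' *: d a, f (d a) a').

Definition dext_form (K : fieldType) (A : vectType K)
    (f : A -> A -> K) (x y : dext A) : K :=
  let: (l, a, m) := x in let: (l', a', m') := y in l * m' + l' * m + f a a'.

(* Since the bracket is bilinear, [L,L] (span of all brackets) is nonzero iff
   some bracket is nonzero, and [L,[L,L]] = 0 iff all [x,[y,z]] vanish. *)
Definition two_step_nilpotent (T : zmodType) (br : T -> T -> T) : Prop :=
  (forall x y z : T, br x (br y z) = 0) /\ (exists x y : T, br x y != 0).

(* Main.v *)
Require Import Defs.
From HB Require Import structures.
From mathcomp Require Import all_boot all_order all_algebra.
From Stdlib Require Import Classical.
Import GRing.Theory.
Local Open Scope ring_scope.

Theorem corollary2p11 (K : fieldType) (A : vectType K)
    (f : A -> A -> K) (d : {linear A -> A})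
    (char0 : [pchar K] =i pred0)
    (f_linl : forall (c : K) (x y z : A), f (c *: x + y) z = c * f x z + f y z)
    (f_sym : forall x y : A, f x y = f y x)
    (f_nondeg : forall x : A, (forall y : A, f x y = 0) -> x = 0)
    (d_skew : forall x y : A, f (d x) y + f x (d y) = 0) :
  two_step_nilpotent (dext_bracket f d) <->
  ((exists x : A, d x != 0) /\ (forall x : A, d (d x) = 0)).
Proof.
have f0 : forall z, f 0 z = 0.
  move=> z; have := f_linl 1 0 0 z; rewrite scale1r addr0 mul1r => /esym/eqP.
  by rewrite -subr_eq0 addrK => /eqP.
split.
- case=> H [x [y Hxy]]; split; last first.
    move=> a; have := H (1, 0, 0) (0, a, 0) (1, 0, 0).
    rewrite /dext_bracket => -[] /eqP.
    by rewrite !scale0r !scale1r linear0 sub0r addr0 linearN oppr_eq0 => /eqP.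
  apply: NNPP => Hn.
  have d0 : forall a, d a = 0.
    move=> a; apply: NNPP => Ha; apply: Hn; exists a; exact/eqP.
  move: Hxy; case: x => [[l a] m]; case: y => [[l' a'] m'].
  by rewrite /dext_bracket !d0 f0 !scaler0 subr0 eqxx.
- case=> [[x0 Hx0] dd]; split.
    move=> [[l a] m] [[l' a'] m'] [[l'' a''] m''].
    rewrite /dext_bracket.
    have Hw : d (l' *: d a'' - l'' *: d a') = 0.
      by rewrite linearB !linearZ /= !dd ?oppr0 !scaler0 ?oppr0 ?addr0 ?subr0.
    rewrite Hw scaler0 scale0r linear0 addr0.
    have := d_skew a (l' *: d a'' - l'' *: d a').
    by rewrite Hw (f_sym a 0) f0 addr0 => ->.
  exists (1, 0, 0), (0, x0, 0); rewrite /dext_bracket.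
  apply/negP => /eqP [] /eqP; rewrite scale1r linear0 scale0r subr0.
  by rewrite (negbTE Hx0).
Qed.
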